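(* Let $p$ be a prime and let $\varphi\in\mathbb{Z}[x]$ with $\varphi\not\equiv 0\bmod p$. Let $l,m$ be nonnegative integers and let $I=\langle p^l,\varphi^m\rangle$ be the ideal of $\mathbb{Z}[x]$. Then (1) $I:\langle p^i\rangle=\langle p^{l-i},\varphi^m\rangle$ for every $i\le l$, and (2) $I:\langle\varphi^j\rangle=\langle p^l,\varphi^{m-j}\rangle$ for every $j\le m$.
   Context: For ideals $I,J$ of a commutative ring $S$, the quotient ideal is $I:J=\{a\in S\mid aJ\subseteq I\}$. *)

(* Defs.v *)
From mathcomp Require Import all_boot all_order all_algebra.
Set Implicit Arguments. Unset Strict Implicit. Unset Printing Implicit Defensive.
Import Order.TTheory GRing.Theory Num.Theory.
Local Open Scope ring_scope.

Definition ideal2 (S : comRingType) (a b : S) : S -> Prop :=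
  fun f => exists u v : S, f = u * a + v * b.

Definition ideal1 (S : comRingType) (c : S) : S -> Prop :=
  fun f => exists u : S, f = u * c.

Definition colon (S : comRingType) (I J : S -> Prop) : S -> Prop :=
  fun a => forall b, J b -> I (a * b).

(* phi is not congruent to 0 mod p: some coefficient is not divisible by p. *)
Definition nonzero_mod (p : nat) (phi : {poly int}) : Prop :=
  exists i : nat, ~~ (p%:Z %| phi`_i)%Z.

(* Main.v *)
Require Import Defs.
From mathcomp Require Import all_boot all_order all_algebra.
From mathcomp Require Import ring.
Import GRing.Theory.
Local Open Scope ring_scope.

Lemma Fp_intr_eq0 (p : nat) (a : int) : prime p ->
  ((a%:~R : 'F_p) == 0) = (p%:Z %| a)%Z.
Proof.
move=> pp; rewrite dvdzE /= (dvdn_pcharf (pchar_Fp pp)).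
case: a => n; first by rewrite /= -pmulrn.
by rewrite NegzE mulrNz oppr_eq0 /= -pmulrn.
Qed.

Lemma polyP_div (p : nat) (g : {poly int}) : (0 < p)%N ->
  (forall i, (p%:Z %| g`_i)%Z) -> exists w, g = w * (p%:R : {poly int}).
Proof.
move=> p0 H; exists (\poly_(i < size g) (g`_i %/ p%:Z)%Z).
apply/polyP => i; rewrite -polyC_natr coefMC coef_poly.
case: ltnP => hi; [by rewrite natz divzK|].
by rewrite mul0r nth_default.
Qed.

Lemma key (p : nat) (phi g w : {poly int}) : prime p -> nonzero_mod p phi ->
  phi * g = w * (p%:R) -> exists w', g = w' * (p%:R : {poly int}).
Proof.
move=> pp [i hi] E; apply: polyP_div; first exact: prime_gt0.
pose f := map_poly (intr : int -> 'F_p).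
have fP : f p%:R = 0 by rewrite /f rmorph_nat -polyC_natr pchar_Fp_0.
have fphi : f phi != 0.
  apply/eqP => h; have := congr1 (fun q : {poly 'F_p} => q`_i) h.
  rewrite /f coef_map coef0 => /eqP.
  by rewrite Fp_intr_eq0 // (negbTE hi).
have : f phi * f g = 0.
  by rewrite -rmorphM E rmorphM rmorph_nat -polyC_natr pchar_Fp_0 // polyC0 mulr0.
move/eqP; rewrite mulf_eq0 (negbTE fphi) /= => /eqP fg j.
by rewrite -Fp_intr_eq0 // -(coef_map (intr : int -> 'F_p)) -/f fg coef0.
Qed.
Arguments key {p phi g w}.
Arguments polyP_div {p g}.

Lemma Pneq0 (p : nat) : prime p -> (p%:R : {poly int}) != 0.
Proof. by move=> pp; rewrite -polyC_natr polyC_eq0 Num.Theory.pnatr_eq0 -lt0n prime_gt0. Qed.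

Arguments Pneq0 {p}.

Lemma key1 (p : nat) (phi : {poly int}) (k : nat) : prime p -> nonzero_mod p phi ->
  forall g w, phi * g = w * (p%:R)^+k -> exists w', g = w' * (p%:R : {poly int})^+k.
Proof.
move=> pp nz; elim: k => [|k IH] g w.
  by move=> _; exists g; rewrite expr0 mulr1.
rewrite exprSr mulrA => E; have [g1 Eg] := key pp nz E.
move: E; rewrite Eg mulrA => /(mulIf (Pneq0 pp)) /IH [w' ->].
by exists w'; rewrite mulrA.
Qed.

Arguments key1 {p phi k}.

Lemma keyn (p : nat) (phi : {poly int}) (n k : nat) : prime p -> nonzero_mod p phi ->
  forall g w, phi^+n * g = w * (p%:R)^+k -> exists w', g = w' * (p%:R : {poly int})^+k.
Proof.
move=> pp nz; elim: n => [|n IH] g w.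
  by rewrite expr0 mul1r => ->; exists w.
rewrite exprS -mulrA => E; have [w1 E1] := key1 pp nz _ _ E; exact: IH _ _ E1.
Qed.

Arguments keyn {p phi} n {k}.

Theorem claim6 (p : nat) (phi : {poly int}) (l m : nat) :
  prime p -> nonzero_mod p phi ->
  let P : {poly int} := p%:R in
  let I := ideal2 (P ^+ l) (phi ^+ m) in
  (forall i : nat, (i <= l)%N ->
     forall f : {poly int},
       colon I (ideal1 (P ^+ i)) f <-> ideal2 (P ^+ (l - i)) (phi ^+ m) f) /\
  (forall j : nat, (j <= m)%N ->
     forall f : {poly int},
       colon I (ideal1 (phi ^+ j)) f <-> ideal2 (P ^+ l) (phi ^+ (m - j)) f).
Proof.
move=> pp nz P I; split.
- move=> i il f; have El : P ^+ l = P ^+ (l - i) * P ^+ i by rewrite -exprD subnK.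
  split.
  + move=> /(_ (P ^+ i)) [|u [v E]]; first by exists 1; rewrite mul1r.
    have : phi ^+ m * v = (f - u * P ^+ (l - i)) * P ^+ i.
      by rewrite mulrBl -mulrA -El E; ring.
    move=> /(keyn m pp nz) [w Ev]; exists u, w.
    apply: (mulIf (expf_neq0 i (Pneq0 pp))); rewrite -/P.
    by rewrite E Ev El; ring.
  + move=> [a [b ->]] _ [w ->]; exists (a * w), (b * w * P ^+ i).
    rewrite El; ring.
- move=> j jm f; have Em : phi ^+ m = phi ^+ (m - j) * phi ^+ j by rewrite -exprD subnK.
  split.
  + move=> /(_ (phi ^+ j)) [|u [v E]]; first by exists 1; rewrite mul1r.
    have : phi ^+ j * (f - v * phi ^+ (m - j)) = u * P ^+ l.
      by rewrite mulrBr mulrC E Em; ring.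
    move=> /(keyn j pp nz) [w Ew]; exists w, v.
    by rewrite -Ew; ring.
  + move=> [a [b ->]] _ [w ->]; exists (a * w * phi ^+ j), (b * w).
    rewrite Em; ring.
Qed.
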